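(* Let $G=(V,E)$ be a digraph and let $(X,T)$ be a tree decomposition of its underlying undirected graph, with bags $X_1,\dots,X_n$. For each bag $X_i$ let $V_i=X_i\cup\{u\in V:(u,v)\in E\text{ for some }v\in X_i\}$ be the set of vertices of $X_i$ together with all their in-neighbors. Then for every $v\in V$, the set $X^v=\{X_i: v\in V_i\}$ of bags forms a connected subtree of $T$.
   Context: A tree decomposition of an undirected graph $H$ is a pair $(X,T)$ where $X=\{X_1,\dots,X_n\}$ is a collection of vertex subsets and $T$ is a tree on $X$ such that: every vertex lies in some $X_i$; for every edge $\{u,v\}$ some $X_i$ contains both $u$ and $v$; and for every vertex $v$ the bags containing $v$ form a connected subtree of $T$. The underlying graph of a digraph is obtained by treating arcs as undirected edges. *)

(* Defs.v *)
From mathcomp Require Import all_boot.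
Set Implicit Arguments. Unset Strict Implicit. Unset Printing Implicit Defensive.

Definition simple_graph (I : finType) (T : rel I) : Prop :=
  symmetric T /\ irreflexive T.

Definition is_tree (I : finType) (T : rel I) : Prop :=
  [/\ simple_graph T, 0 < #|I|,
      (forall x y : I, connect T x y) &
      (forall s : seq I, uniq s -> 3 <= size s -> ~~ cycle T s)].

Definition connected_subtree (I : finType) (T : rel I) (S : {set I}) : Prop :=
  S != set0 /\
  (forall x y, x \in S -> y \in S ->
     connect [rel a b | [&& a \in S, b \in S & T a b]] x y).

Definition tree_decomposition (V I : finType) (E : rel V)
    (bag : I -> {set V}) (T : rel I) : Prop :=
  [/\ is_tree T,
      (forall v : V, exists i, v \in bag i),
      (forall u v : V, E u v || E v u -> exists i, (u \in bag i) && (v \in bag i)) &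
      (forall v : V, connected_subtree T [set i | v \in bag i])].

Definition ext_bag (V I : finType) (E : rel V) (bag : I -> {set V}) (i : I)
    : {set V} :=
  bag i :|: [set u | [exists v in bag i, E u v]].

(* Main.v *)
Require Import Defs.
From mathcomp Require Import all_boot.

Theorem lemmaA1 (V I : finType) (E : rel V) (bag : I -> {set V}) (T : rel I) :
  tree_decomposition E bag T ->
  forall v : V, connected_subtree T [set i | v \in ext_bag E bag i].
Proof.
case=> [[[symT _] _ _ _] cov edg sub] v.
set S := [set i | v \in ext_bag E bag i].
set R := [rel a b | [&& a \in S, b \in S & T a b]].
have symR : symmetric R.
  by move=> a b /=; rewrite symT; case: (a \in S); case: (b \in S).
have csym := sym_connect_sym symR.
have mono : forall w, (forall i, w \in bag i -> i \in S) ->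
    forall x y, w \in bag x -> w \in bag y -> connect R x y.
  move=> w hw x y hx hy.
  have [_ /(_ x y)] := sub w; rewrite !inE => /(_ hx hy).
  apply: connect_sub => a b /= /and3P[ha hb hab]; apply: connect1.
  by rewrite /= hab !hw -?(@in_set _ (fun i => w \in bag i)) //.
have hv : forall i, v \in bag i -> i \in S by move=> i hi; rewrite inE /ext_bag inE hi.
have [i0 hi0] := cov v.
have key : forall x, x \in S -> connect R x i0.
  move=> x; rewrite inE /ext_bag !inE => /orP[hx|/existsP[u /andP[hu Evu]]].
    exact: mono hx hi0.
  have [j /andP[vj uj]] := edg v u (introT orP (or_introl Evu)).
  have hu' : forall i, u \in bag i -> i \in S.
    move=> i hi; rewrite inE /ext_bag !inE; apply/orP; right.
    by apply/existsP; exists u; rewrite hi.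
  exact: connect_trans (mono u hu' x j hu uj) (mono v hv j i0 vj hi0).
split.
  by apply/set0Pn; exists i0; exact: hv.
move=> x y hx hy; apply: connect_trans (key x hx) _.
by rewrite csym; exact: key.
Qed.
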